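(* Let $\mathbf{k}_1,\dots,\mathbf{k}_N \in \mathbb{R}^d$ (anchor keys), let $\delta:\mathbb{R}^d\to\mathbb{R}^d$ (the drift function), let $\mathbf{z}\in\mathbb{R}^d$ (a query), and let $\tau>0$, $\beta = 1/\tau$. Define the attention weights $p_i = \exp(\beta\mathbf{k}_i^\top\mathbf{z})/\sum_{j=1}^N\exp(\beta\mathbf{k}_j^\top\mathbf{z})$ and the estimate $\hat{\boldsymbol{\delta}}(\mathbf{z}) = \sum_{i=1}^N p_i\,\delta(\mathbf{k}_i)$. Assume there is a constant $L\ge 0$ such that $\|\delta(\mathbf{k}_i)-\delta(\mathbf{z})\| \le L\|\mathbf{k}_i-\mathbf{z}\|$ for all $i=1,\dots,N$. Then $$\|\hat{\boldsymbol{\delta}}(\mathbf{z}) - \delta(\mathbf{z})\| \le L\sum_{i=1}^N p_i\|\mathbf{k}_i-\mathbf{z}\|.$$ Furthermore, if $\|\mathbf{k}_i\| = \|\mathbf{z}\| = 1$ for all $i$, then $$\|\hat{\boldsymbol{\delta}}(\mathbf{z}) - \delta(\mathbf{z})\| \le L\Big(\min_i\|\mathbf{k}_i-\mathbf{z}\| + \sqrt{2\tau\log N}\Big).$$ Moreover, if the attention is restricted to the set $S$ of the $k$ anchors with the largest scores $\mathbf{k}_i^\top\mathbf{z}$ (with the softmax weights renormalized over $S$ and $\hat{\boldsymbol{\delta}}(\mathbf{z}) = \sum_{i\in S}p_i\delta(\mathbf{k}_i)$), then under the same normalization the last bound holds with $N$ replaced by $k$.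
   Context: Norms are Euclidean ($\ell_2$). The quantity $\hat{\boldsymbol{\delta}}(\mathbf{z})$ is the drift estimate of a softmax (dot-product) attention retrieval over anchor keys $\mathbf{k}_i$ whose associated values are the drifts $\delta(\mathbf{k}_i)$; $\tau$ is the softmax temperature. *)

(* Defs.v *)
From HB Require Import structures.
From mathcomp Require Import all_boot all_order all_algebra.
From mathcomp Require Import all_classical all_reals all_analysis.
Set Implicit Arguments. Unset Strict Implicit. Unset Printing Implicit Defensive.
Import Order.TTheory GRing.Theory Num.Theory.
Local Open Scope ring_scope.

Section Attn.
Variables (R : realType) (d N : nat).

Definition dotv (u v : 'rV[R]_d) : R := \sum_(l < d) u 0 l * v 0 l.
Definition normv (u : 'rV[R]_d) : R := Num.sqrt (dotv u u).

Definition softmax_w (beta : R) (k : 'I_N -> 'rV[R]_d) (z : 'rV[R]_d)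
    (i : 'I_N) : R :=
  expR (beta * dotv (k i) z) / \sum_(j < N) expR (beta * dotv (k j) z).

Definition attn_est (beta : R) (k : 'I_N -> 'rV[R]_d)
    (delta : 'rV[R]_d -> 'rV[R]_d) (z : 'rV[R]_d) : 'rV[R]_d :=
  \sum_(i < N) softmax_w beta k z i *: delta (k i).

Definition softmax_w_on (S : {set 'I_N}) (beta : R) (k : 'I_N -> 'rV[R]_d)
    (z : 'rV[R]_d) (i : 'I_N) : R :=
  expR (beta * dotv (k i) z) / \sum_(j in S) expR (beta * dotv (k j) z).

Definition attn_est_on (S : {set 'I_N}) (beta : R) (k : 'I_N -> 'rV[R]_d)
    (delta : 'rV[R]_d -> 'rV[R]_d) (z : 'rV[R]_d) : 'rV[R]_d :=
  \sum_(i in S) softmax_w_on S beta k z i *: delta (k i).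

Definition is_topk (kk : nat) (S : {set 'I_N}) (k : 'I_N -> 'rV[R]_d)
    (z : 'rV[R]_d) : Prop :=
  #|S| = kk /\
  forall i j, i \in S -> j \notin S -> dotv (k j) z <= dotv (k i) z.

End Attn.

(* minimum of a sequence of reals (the true minimum when s is nonempty) *)
Definition seqmin (R : realType) (s : seq R) : R :=
  foldr Num.min (head 0 s) s.

Definition min_dist (R : realType) (d N : nat) (k : 'I_N -> 'rV[R]_d)
    (z : 'rV[R]_d) : R :=
  seqmin [seq normv (k i - z) | i <- enum 'I_N].

(* Main.v *)
Require Import Defs.
From HB Require Import structures.
From mathcomp Require Import all_boot all_order all_algebra.
From mathcomp Require Import all_classical all_reals all_analysis.
From mathcomp Require Import ring lra.
Import Order.TTheory GRing.Theory Num.Theory.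
Local Open Scope ring_scope.

Section Aux.
Variable R : realType.

Lemma cs_weighted (I : finType) (P : pred I) (w a b : I -> R) :
  (forall i, P i -> 0 <= w i) ->
  (\sum_(i | P i) w i * a i * b i) ^+ 2 <=
  (\sum_(i | P i) w i * a i ^+ 2) * (\sum_(i | P i) w i * b i ^+ 2).
Proof.
move=> w0.
have H : 0 <= \sum_(i | P i) \sum_(j | P j) w i * w j * (a i * b j - a j * b i) ^+ 2.
  apply: sumr_ge0 => i Pi; apply: sumr_ge0 => j Pj.
  by apply: mulr_ge0; [apply: mulr_ge0; apply: w0|apply: sqr_ge0].
have dsum : forall (F G : I -> R), \sum_(i | P i) \sum_(j | P j) F i * G j = (\sum_(i | P i) F i) * (\sum_(j | P j) G j).
  by move=> F G; rewrite mulr_suml; apply: eq_bigr => i _; rewrite mulr_sumr.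
have E : \sum_(i | P i) \sum_(j | P j) w i * w j * (a i * b j - a j * b i) ^+ 2
  = \sum_(i | P i) \sum_(j | P j) ((w i * a i ^+ 2) * (w j * b j ^+ 2)
      + (w i * b i ^+ 2) * (w j * a j ^+ 2) - (2 * (w i * a i * b i)) * (w j * a j * b j)).
  by apply: eq_bigr => i _; apply: eq_bigr => j _; ring.
rewrite E in H.
have E2 : forall (F1 G1 F2 G2 F3 G3 : I -> R),
   \sum_(i | P i) \sum_(j | P j) (F1 i * G1 j + F2 i * G2 j - F3 i * G3 j) =
   \sum_(i | P i) \sum_(j | P j) F1 i * G1 j + \sum_(i | P i) \sum_(j | P j) F2 i * G2 j
   - \sum_(i | P i) \sum_(j | P j) F3 i * G3 j.
  move=> F1 G1 F2 G2 F3 G3; rewrite -big_split -sumrB /=; apply: eq_bigr => i _.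
  by rewrite -big_split -sumrB.
rewrite E2 !dsum -mulr_sumr in H.
set A := \sum_(i | P i) _ in H; set B := \sum_(i | P i) _ in H; set C := \sum_(i | P i) _ in H.
rewrite -/A -/B -/C. nra.
Qed.


Variable d : nat.
Implicit Types u v w : 'rV[R]_d.

Lemma dotvDl u v w : dotv (u + v) w = dotv u w + dotv v w.
Proof. by rewrite /dotv -big_split; apply: eq_bigr => l _; rewrite mxE mulrDl. Qed.
Lemma dotvZl c u w : dotv (c *: u) w = c * dotv u w.
Proof. by rewrite /dotv mulr_sumr; apply: eq_bigr => l _; rewrite mxE mulrA. Qed.
Lemma dotvC u v : dotv u v = dotv v u.
Proof. by apply: eq_bigr => l _; rewrite mulrC. Qed.
Lemma dotvDr u v w : dotv w (u + v) = dotv w u + dotv w v.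
Proof. by rewrite !(dotvC w) dotvDl. Qed.
Lemma dotvZr c u w : dotv w (c *: u) = c * dotv w u.
Proof. by rewrite !(dotvC w) dotvZl. Qed.
Lemma dotvNl u w : dotv (- u) w = - dotv u w.
Proof. by rewrite -scaleN1r dotvZl mulN1r. Qed.
Lemma dotvNr u w : dotv w (- u) = - dotv w u.
Proof. by rewrite !(dotvC w) dotvNl. Qed.
Lemma dotvv_ge0 u : 0 <= dotv u u.
Proof. by apply: sumr_ge0 => l _; rewrite -expr2 sqr_ge0. Qed.
Lemma normv_ge0 u : 0 <= normv u.
Proof. exact: sqrtr_ge0. Qed.
Lemma normv_sq u : normv u ^+ 2 = dotv u u.
Proof. by rewrite /normv sqr_sqrtr // dotvv_ge0. Qed.

Lemma dotv_cs u v : dotv u v <= normv u * normv v.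
Proof.
have h : dotv u v ^+ 2 <= dotv u u * dotv v v.
  have := @cs_weighted _ predT (fun _ => 1) (fun l => u 0 l) (fun l => v 0 l) (fun _ _ => ler01).
  rewrite /dotv.
  under eq_bigr do rewrite mul1r.
  under [X in _ <= X * _]eq_bigr do rewrite mul1r expr2.
  by under [X in _ <= _ * X]eq_bigr do rewrite mul1r expr2.
rewrite -!normv_sq -exprMn in h.
apply: le_trans (ler_norm _) _.
by rewrite -(ler_pXn2r (isT : (0 < 2)%N)) ?nnegrE ?normr_ge0 ?mulr_ge0 ?normv_ge0 // real_normK ?num_real.
Qed.

Lemma normvD u v : normv (u + v) <= normv u + normv v.
Proof.
rewrite -(ler_pXn2r (isT : (0 < 2)%N)) ?nnegrE ?addr_ge0 ?normv_ge0 //.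
rewrite normv_sq dotvDl !dotvDr -!normv_sq (dotvC v u).
have := dotv_cs u v. nra.
Qed.

Lemma normvZ c u : normv (c *: u) = `|c| * normv u.
Proof.
by rewrite /normv dotvZl dotvZr mulrA -expr2 sqrtrM ?sqr_ge0 // sqrtr_sqr.
Qed.

Lemma normv_sum (I : finType) (P : pred I) (F : I -> 'rV[R]_d) :
  normv (\sum_(i | P i) F i) <= \sum_(i | P i) normv (F i).
Proof.
elim/big_rec2: _ => [|i y1 y2 _ h].
  by rewrite /normv /dotv big1 ?sqrtr0 // => l _; rewrite mxE mul0r.
by apply: le_trans (normvD _ _) _; rewrite lerD2l.
Qed.


Lemma weighted_bound (I : finType) (P : pred I) (w : I -> R) (x : I -> 'rV[R]_d)
   (y : 'rV[R]_d) (g : I -> R) :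
  (forall i, P i -> 0 <= w i) -> \sum_(i | P i) w i = 1 ->
  (forall i, P i -> normv (x i - y) <= g i) ->
  normv (\sum_(i | P i) w i *: x i - y) <= \sum_(i | P i) w i * g i.
Proof.
move=> w0 w1 hg.
have -> : \sum_(i | P i) w i *: x i - y = \sum_(i | P i) w i *: (x i - y).
  rewrite [X in _ - X](_ : y = \sum_(i | P i) w i *: y); last by rewrite -scaler_suml w1 scale1r.
  rewrite -sumrB.
  by apply: eq_bigr => i _; rewrite scalerBr.
apply: le_trans (normv_sum _ _ _) _.
apply: ler_sum => i Pi; rewrite normvZ ger0_norm ?w0 //.
by apply: ler_wpM2l; [apply: w0| apply: hg].
Qed.

Lemma jensen_sqrt (I : finType) (P : pred I) (w r : I -> R) :
  (forall i, P i -> 0 <= w i) -> \sum_(i | P i) w i = 1 ->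
  \sum_(i | P i) w i * r i <= Num.sqrt (\sum_(i | P i) w i * r i ^+ 2).
Proof.
move=> w0 w1.
have := @cs_weighted _ P w (fun _ => 1) r w0.
under eq_bigr do rewrite mulr1.
under [X in _ <= X * _]eq_bigr do rewrite expr1n mulr1.
rewrite w1 mul1r => h.
apply: le_trans (ler_norm _) _.
by rewrite -sqrtr_sqr ler_sqrt // (le_trans _ h) ?sqr_ge0.
Qed.

Lemma entropy_bound (I : finType) (P : pred I) (s : I -> R) (b : R) (n : nat) (i0 : I) :
  0 < b -> P i0 -> (forall j, P j -> s j <= s i0) -> \sum_(i | P i) (1 : R) = n%:R ->
  s i0 - b^-1 * ln (n%:R : R) <=
  \sum_(i | P i) (expR (b * s i) / \sum_(j | P j) expR (b * s j)) * s i.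
Proof.
move=> b0 Pi0 smax hn.
set Z := \sum_(j | P j) expR (b * s j).
have Zge : expR (b * s i0) <= Z.
  rewrite /Z (bigD1 i0) //= lerDl; apply: sumr_ge0 => i _; exact/ltW/expR_gt0.
have Z0 : 0 < Z by apply: lt_le_trans (expR_gt0 _) Zge.
have n0 : (0 : R) < n%:R.
  rewrite -hn (bigD1 i0) //= ltr_pwDl //; apply: sumr_ge0 => i _; exact: ler01.
set w := fun i => expR (b * s i) / Z.
have w0 : forall i, 0 < w i by move=> i; rewrite /w divr_gt0 ?expR_gt0.
have w1 : \sum_(i | P i) w i = 1 by rewrite /w -mulr_suml divff // gt_eqF.
have key : forall i, w i * (ln Z - ln (n%:R) - b * s i) <= n%:R^-1 - w i.
  move=> i.
  have e : ln Z - ln (n%:R) - b * s i = ln (Z / (n%:R * expR (b * s i))).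
    rewrite ln_div ?posrE ?mulr_gt0 ?expR_gt0 // lnM ?posrE ?expR_gt0 // expRK.
    by rewrite opprD addrA.
  rewrite e.
  have yp : 0 < Z / (n%:R * expR (b * s i)) by rewrite divr_gt0 ?mulr_gt0 ?expR_gt0.
  have hl : ln (Z / (n%:R * expR (b * s i))) <= Z / (n%:R * expR (b * s i)) - 1.
    have := expR_ge1Dx (ln (Z / (n%:R * expR (b * s i)))).
    rewrite lnK ?posrE //; lra.
  apply: le_trans (ler_wpM2l (ltW (w0 i)) hl) _.
  rewrite mulrBr mulr1 /w lerD2r.
  have ne : expR (b * s i) != 0 by rewrite gt_eqF ?expR_gt0.
  have nz : Z != 0 by rewrite gt_eqF.
  have nn : (n%:R : R) != 0 by rewrite gt_eqF.
  rewrite le_eqVlt; apply/orP; left; apply/eqP; field.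
  by rewrite ne nz nn.
have S1 := @ler_sum _ _ (index_enum I) P _ _ (fun i _ => key i).
have eR : \sum_(i | P i) (n%:R^-1 - w i) = 0.
  rewrite sumrB w1.
  have -> : \sum_(i | P i) n%:R^-1 = n%:R^-1 * \sum_(i | P i) (1 : R).
    by rewrite mulr_sumr; apply: eq_bigr => i _; rewrite mulr1.
  by rewrite hn mulVf ?subrr // gt_eqF.
set T := \sum_(i | P i) expR (b * s i) / Z * s i.
have eL : \sum_(i | P i) w i * (ln Z - ln (n%:R : R) - b * s i)
    = (ln Z - ln (n%:R : R)) - b * T.
  under eq_bigr do rewrite mulrBr.
  rewrite sumrB -mulr_suml w1 mul1r mulr_sumr /T.
  by congr (_ - _); apply: eq_bigr => i _; rewrite /w mulrCA.
rewrite eR eL in S1.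
have lZ : b * s i0 <= ln Z.
  by rewrite -[X in X <= _]expRK ler_ln ?posrE ?expR_gt0.
have h2 : b * s i0 - ln (n%:R : R) <= b * T by lra.
have -> : s i0 - b^-1 * ln (n%:R : R) = b^-1 * (b * s i0 - ln (n%:R : R)).
  by rewrite mulrBr mulrA mulVf ?mul1r // gt_eqF.
have bn : b != 0 by rewrite gt_eqF.
rewrite -[T in _ <= T](mulKf bn).
by apply: ler_wpM2l => //; rewrite invr_ge0 ltW.
Qed.


Lemma foldr_min_in (a : R) (s : seq R) : foldr Num.min a s \in a :: s.
Proof.
elim: s => [|x s IH] /=; first by rewrite mem_seq1.
rewrite [Num.min _ _]/Order.min; case: ifP => _; first by rewrite !inE eqxx orbT.
by move: IH; rewrite !inE => /orP [->|->] //; rewrite !orbT.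
Qed.

Lemma seqmin_in (s : seq R) : s != [::] -> seqmin s \in s.
Proof.
case: s => [|x s] // _; rewrite /seqmin /=.
by have := foldr_min_in x (x :: s); rewrite /= [in X in X -> _]inE orbA orbb.
Qed.

Lemma min_dist_ex (N : nat) (k : 'I_N -> 'rV[R]_d) z (i0 : 'I_N) :
  exists j, min_dist k z = normv (k j - z).
Proof.
have : min_dist k z \in [seq normv (k i - z) | i <- enum 'I_N].
  apply: seqmin_in; apply/eqP => h.
  have : normv (k i0 - z) \in [seq normv (k i - z) | i <- enum 'I_N].
    by apply: map_f; rewrite mem_enum.
  by rewrite h.
by case/mapP => j _ ->; exists j.
Qed.


Lemma core (N : nat) (P : pred 'I_N) (n : nat) (k : 'I_N -> 'rV[R]_d)
  (delta : 'rV[R]_d -> 'rV[R]_d) (z : 'rV[R]_d) (tau L : R) (i0 : 'I_N) :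
  0 < tau -> 0 <= L ->
  (forall i, normv (delta (k i) - delta z) <= L * normv (k i - z)) ->
  (forall i, normv (k i) = 1) -> normv z = 1 -> P i0 ->
  (forall j, dotv (k j) z <= dotv (k i0) z) ->
  \sum_(i | P i) (1 : R) = n%:R ->
  normv (\sum_(i | P i) (expR (tau^-1 * dotv (k i) z) /
            \sum_(j | P j) expR (tau^-1 * dotv (k j) z)) *: delta (k i) - delta z)
   <= L * (min_dist k z + Num.sqrt (2 * tau * ln (n%:R : R))).
Proof.
move=> t0 L0 hL nk nz Pi0 smax hn.
set Z := \sum_(j | P j) expR (tau^-1 * dotv (k j) z).
set w := fun i => expR (tau^-1 * dotv (k i) z) / Z.
have Zge : expR (tau^-1 * dotv (k i0) z) <= Z.
  rewrite /Z (bigD1 i0) //= lerDl; apply: sumr_ge0 => i _; exact/ltW/expR_gt0.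
have Z0 : 0 < Z by apply: lt_le_trans (expR_gt0 _) Zge.
have n1 : (1 : R) <= n%:R.
  rewrite -hn (bigD1 i0) //= lerDl; apply: sumr_ge0 => i _; exact: ler01.
have w0 : forall i, P i -> 0 <= w i by move=> i _; rewrite /w divr_ge0 ?ltW ?expR_gt0.
have w1 : \sum_(i | P i) w i = 1 by rewrite /w -mulr_suml divff // gt_eqF.
have step1 := @weighted_bound _ P w (fun i => delta (k i)) (delta z)
   (fun i => L * normv (k i - z)) w0 w1 (fun i _ => hL i).
apply: le_trans step1 _.
have -> : \sum_(i | P i) w i * (L * normv (k i - z)) = L * \sum_(i | P i) w i * normv (k i - z).
  by rewrite mulr_sumr; apply: eq_bigr => i _; rewrite mulrCA.
apply: ler_wpM2l => //.
apply: le_trans (@jensen_sqrt _ P w (fun i => normv (k i - z)) w0 w1) _.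
have rsq : forall i, normv (k i - z) ^+ 2 = 2 - 2 * dotv (k i) z.
  move=> i; rewrite normv_sq dotvDl !dotvDr !dotvNl !dotvNr opprK.
  rewrite -(normv_sq (k i)) -(normv_sq z) nk nz (dotvC z); lra.
have ltr0_inv : 0 < tau -> 0 < tau^-1 by move=> h; rewrite invr_gt0.
have ent := @entropy_bound _ P (fun i => dotv (k i) z) tau^-1 n i0
  (ltr0_inv t0) Pi0 (fun j _ => smax j) hn.
rewrite invrK /= in ent.
have -> : \sum_(i | P i) w i * normv (k i - z) ^+ 2 = 2 - 2 * \sum_(i | P i) w i * dotv (k i) z.
  under eq_bigr do rewrite rsq mulrBr mulrCA.
  by rewrite sumrB -mulr_suml w1 -mulr_sumr mul1r.
set T := \sum_(i | P i) _ in ent.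
have eT : \sum_(i | P i) w i * dotv (k i) z = T by [].
rewrite eT.
have a0 : 0 <= 2 * tau * ln (n%:R : R).
  apply: mulr_ge0; [apply: mulr_ge0; lra | exact: ln_ge0].
have [j ej] := @min_dist_ex N k z i0.
have r0j : normv (k i0 - z) <= min_dist k z.
  rewrite ej -(ler_pXn2r (isT : (0 < 2)%N)) ?nnegrE ?normv_ge0 // !rsq.
  have := smax j; lra.
apply: (@le_trans _ _ (Num.sqrt ((normv (k i0 - z) + Num.sqrt (2 * tau * ln (n%:R : R))) ^+ 2))).
  rewrite ler_sqrt ?sqr_ge0 // sqrrD rsq sqr_sqrtr // mulr2n.
  have := normv_ge0 (k i0 - z); have := sqrtr_ge0 (2 * tau * ln (n%:R : R)).
  nra.
rewrite sqrtr_sqr ger0_norm ?addr_ge0 ?normv_ge0 ?sqrtr_ge0 //.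
by rewrite lerD2r.
Qed.

End Aux.

Theorem proposition3p6 (R : realType) (d N : nat) (k : 'I_N -> 'rV[R]_d)
    (delta : 'rV[R]_d -> 'rV[R]_d) (z : 'rV[R]_d) (tau L : R) :
  (0 < N)%N -> 0 < tau -> 0 <= L ->
  (forall i, normv (delta (k i) - delta z) <= L * normv (k i - z)) ->
  [/\ normv (attn_est tau^-1 k delta z - delta z)
        <= L * \sum_(i < N) softmax_w tau^-1 k z i * normv (k i - z),
      (forall i, normv (k i) = 1) -> normv z = 1 ->
        normv (attn_est tau^-1 k delta z - delta z)
          <= L * (min_dist k z + Num.sqrt (2 * tau * ln (N%:R : R)))
    & forall (kk : nat) (S : {set 'I_N}),
        (0 < kk)%N -> is_topk kk S k z ->
        (forall i, normv (k i) = 1) -> normv z = 1 ->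
        normv (attn_est_on S tau^-1 k delta z - delta z)
          <= L * (min_dist k z + Num.sqrt (2 * tau * ln (kk%:R : R)))].
Proof.
move=> hN t0 L0 hL.
set o := Ordinal hN.
have [i0 _ hmax] := @arg_maxP _ _ _ o predT (fun i => dotv (k i) z) isT.
split.
- set w := softmax_w tau^-1 k z.
  set Z := \sum_(j < N) expR (tau^-1 * dotv (k j) z).
  have Z0 : 0 < Z.
    rewrite /Z (bigD1 o) //= ltr_pwDl ?expR_gt0 //; apply: sumr_ge0 => i _; exact/ltW/expR_gt0.
  have w0 : forall i, predT i -> 0 <= w i.
    by move=> i _; rewrite /w /softmax_w divr_ge0 ?ltW ?expR_gt0.
  have w1 : \sum_(i | predT i) w i = 1.
    by rewrite /w /softmax_w -mulr_suml -/Z divff // gt_eqF.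
  have := @weighted_bound R d _ predT w (fun i => delta (k i)) (delta z)
    (fun i => L * normv (k i - z)) w0 w1 (fun i _ => hL i).
  rewrite /attn_est -/w => h; apply: le_trans h _.
  by rewrite mulr_sumr le_eqVlt; apply/orP; left; apply/eqP; apply: eq_bigr => i _; rewrite mulrCA.
- move=> nk nz.
  have hn : \sum_(i : 'I_N | predT i) (1 : R) = N%:R.
    by change (\sum_(i < N) (1 : R) = N%:R); rewrite big_const_ord; elim: (N) => //= n ->; rewrite mulrS.
  exact: (@core R d N predT N k delta z tau L i0 t0 L0 hL nk nz isT (fun j => hmax j isT) hn).
- move=> kk S kk0 [cS top] nk nz.
  have /card_gt0P [i1 i1S] : (0 < #|S|)%N by rewrite cS.
  have [i2 i2S hmax2] := @arg_maxP _ _ _ i1 (fun i => i \in S) (fun i => dotv (k i) z) i1S.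
  have smax : forall j, dotv (k j) z <= dotv (k i2) z.
    move=> j; case: (boolP (j \in S)) => jS; first exact: hmax2.
    exact: top.
  have hn : \sum_(i | i \in S) (1 : R) = kk%:R by rewrite sumr_const cS.
  exact: (@core R d N (fun i => i \in S) kk k delta z tau L i2 t0 L0 hL nk nz i2S smax hn).
Qed.
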